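(* If $k \geq 9$ and $|q - q_k| < q_k^{-2k-6}$, then $d_{\mathrm{H}}(\pi_q(S_{k-1}), \pi_{q_k}(S_{k-1})) < q_k^{-2k-4}$.
   Context: $q_k$ is the unique root in $(1,2)$ of $x^k - x^{k-1} - \cdots - x - 1 = 0$. $\pi_q((\epsilon_j)_{j\ge1}) = \sum_{j\ge1}\epsilon_j q^{-j}$. $S_{k-1}$ is the set of $(\epsilon_j) \in \{0,1\}^\mathbb{N}$ containing no block of consecutive entries equal to $01^{k-1}$ or $10^{k-1}$. $d_{\mathrm{H}}(X,Y) = \max\{\sup_{x\in X}d(x,Y),\sup_{y\in Y}d(y,X)\}$ is the Hausdorff distance. *)

(* Defs.v *)
From Stdlib Require Import Reals.
From Coquelicot Require Import Coquelicot.
Open Scope R_scope.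

(* Digit sequences (eps_j)_{j>=1} in {0,1}^N are encoded as eps : nat -> bool,
   with eps n standing for eps_{n+1} (true = 1, false = 0). *)

Definition piq (q : R) (eps : nat -> bool) : R :=
  Series (fun n => (if eps n then 1 else 0) / q ^ (S n)).

Definition S_avoid (m : nat) (eps : nat -> bool) : Prop :=
  ~ (exists n : nat,
       (eps n = false /\ forall i, (1 <= i <= m)%nat -> eps (n + i)%nat = true) \/
       (eps n = true  /\ forall i, (1 <= i <= m)%nat -> eps (n + i)%nat = false)).

Definition piq_S (q : R) (m : nat) : R -> Prop :=
  fun x => exists eps, S_avoid m eps /\ x = piq q eps.

Definition dist_set (x : R) (Y : R -> Prop) : Rbar :=
  Glb_Rbar (fun r => exists y, Y y /\ r = Rabs (x - y)).

Definition sup_dist (X Y : R -> Prop) : Rbar :=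
  Rbar_lub (fun r => exists x, X x /\ r = dist_set x Y).

Definition Rbar_max (a b : Rbar) : Rbar :=
  if Rbar_le_dec a b then b else a.

Definition dH (X Y : R -> Prop) : Rbar :=
  Rbar_max (sup_dist X Y) (sup_dist Y X).

(* Main.v *)
Require Import Defs.
From Stdlib Require Import Reals Lra Lia.
From Coquelicot Require Import Coquelicot.
Open Scope R_scope.

Definition LL : R := 198/100.
Definition UU : R := 201/100.
Definition rr : R := 3/2 * UU / (LL * LL).

Lemma nbound (n : nat) : INR (S n) <= 2 * (3/2)^n.
Proof.
  induction n as [|n IH].
  - simpl. lra.
  - rewrite S_INR. simpl pow.
    destruct n as [|n].
    + simpl. lra.
    + rewrite !S_INR in IH |- *. pose proof (pos_INR n). simpl pow in *. lra.
Qed.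

Lemma powdiff (p q : R) (n : nat) : 0 < p <= UU -> 0 < q <= UU ->
  Rabs (p ^ S n - q ^ S n) <= INR (S n) * UU ^ n * Rabs (p - q).
Proof.
  intros Hp Hq. induction n as [|n IH].
  - simpl. rewrite !Rmult_1_r. lra.
  - replace (p ^ S (S n) - q ^ S (S n)) with
      (p * (p ^ S n - q ^ S n) + q ^ S n * (p - q)) by (simpl; ring).
    eapply Rle_trans. apply Rabs_triang.
    rewrite !Rabs_mult.
    assert (Hqn : Rabs (q ^ S n) <= UU ^ S n).
    { rewrite Rabs_right. apply pow_incr; lra.
      apply Rle_ge, pow_le; lra. }
    assert (Hp' : Rabs p <= UU) by (rewrite Rabs_right; lra).
    pose proof (Rabs_pos (p ^ S n - q ^ S n)).
    pose proof (Rabs_pos (p - q)).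
    pose proof (Rabs_pos p).
    assert (HH1 : Rabs p * Rabs (p ^ S n - q ^ S n) <= UU * (INR (S n) * UU ^ n * Rabs (p - q))).
    { apply Rmult_le_compat; auto. }
    assert (HH2 : Rabs (q ^ S n) * Rabs (p - q) <= UU ^ S n * Rabs (p - q)).
    { apply Rmult_le_compat_r; auto. }
    rewrite (S_INR (S n)). simpl pow in *. lra.
Qed.

Definition cf (b : bool) : R := if b then 1 else 0.

Lemma key (p q : R) (eps : nat -> bool) : LL <= p <= UU -> LL <= q <= UU ->
  Rabs (piq q eps - piq p eps) <= 2 * Rabs (q - p) / (LL * LL) * / (1 - rr).
Proof.
  intros Hp Hq.
  set (del := Rabs (q - p)).
  set (a := fun n => (if eps n then 1 else 0) / q ^ S n).
  set (b := fun n => (if eps n then 1 else 0) / p ^ S n).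
  set (d := fun n => 2 * del / (LL * LL) * rr ^ n).
  assert (Hr : Rabs rr < 1) by (unfold rr, UU, LL; rewrite Rabs_right; lra).
  assert (Hd : ex_series d).
  { unfold d. apply (ex_series_scal_l (2 * del / (LL * LL)) (fun n => rr ^ n)).
    apply ex_series_geom; auto. }
  assert (Sd : Series d = 2 * del / (LL * LL) * / (1 - rr)).
  { unfold d. rewrite Series_scal_l, Series_geom; auto. }
  assert (geo : forall x, LL <= x -> ex_series (fun n => (if eps n then 1 else 0) / x ^ S n)).
  { intros x Hx. apply (@ex_series_le R_AbsRing R_CompleteNormedModule _ (fun n => (/ x) ^ n)).
    - intros n. change norm with Rabs. simpl.
      assert (0 < x ^ n) by (apply pow_lt; unfold LL in *; lra).
      assert (x ^ n <= x * x ^ n) by (unfold LL in *; nra).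
      rewrite pow_inv.
      destruct (eps n); rewrite ?Rdiv_0_l, ?Rabs_R0.
      + rewrite Rabs_right. unfold Rdiv. rewrite Rmult_1_l.
        apply Rinv_le_contravar; lra.
        apply Rle_ge; unfold Rdiv; rewrite Rmult_1_l.
        apply Rlt_le, Rinv_0_lt_compat; nra.
      + apply Rlt_le, Rinv_0_lt_compat; lra.
    - apply ex_series_geom. unfold LL in *. rewrite Rabs_right.
      apply (Rmult_lt_reg_l x); try lra. rewrite Rinv_r; lra.
      apply Rle_ge, Rlt_le, Rinv_0_lt_compat; lra. }
  assert (Hterm : forall n, Rabs (a n - b n) <= d n).
  { intros n. unfold a, b, d.
    assert (hpn : LL ^ S n <= p ^ S n) by (apply pow_incr; unfold LL in *; lra).
    assert (hqn : LL ^ S n <= q ^ S n) by (apply pow_incr; unfold LL in *; lra).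
    assert (hLn : 0 < LL ^ S n) by (apply pow_lt; unfold LL; lra).
    assert (hB : LL ^ S n * LL ^ S n = (LL * LL) * (LL * LL) ^ n).
    { rewrite Rpow_mult_distr. simpl. ring. }
    assert (hr : rr ^ n = (3/2) ^ n * UU ^ n * / (LL * LL) ^ n).
    { unfold rr. change (3 / 2 * UU / (LL * LL)) with (3 / 2 * UU * / (LL * LL)). rewrite (Rpow_mult_distr (3/2*UU)), pow_inv, (Rpow_mult_distr (3/2)). ring. }
    assert (hPD := powdiff p q n ltac:(unfold LL in *; lra) ltac:(unfold LL in *; lra)).
    rewrite (Rabs_minus_sym p q) in hPD. fold del in hPD.
    pose proof (nbound n).
    assert (hU : 0 < UU ^ n) by (apply pow_lt; unfold UU; lra).
    assert (hdel : 0 <= del) by apply Rabs_pos.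
    assert (hBp : 0 < (LL * LL) ^ n) by (apply pow_lt; unfold LL; lra).
    set (P := p ^ S n) in *. set (Q := q ^ S n) in *.
    assert (eq1 : Rabs ((if eps n then 1 else 0) / Q - (if eps n then 1 else 0) / P)
                  = (if eps n then 1 else 0) * Rabs (P - Q) / (P * Q)).
    { destruct (eps n).
      - replace (1 / Q - 1 / P) with ((P - Q) / (P * Q)) by (field; lra).
        unfold Rdiv. rewrite Rabs_mult, Rabs_inv, (Rabs_right (P * Q)); [ring | nra].
      - unfold Rdiv. rewrite !Rmult_0_l, Rminus_0_r, Rabs_R0. ring. }
    rewrite eq1, hr.
    assert (hPQ : LL ^ S n * LL ^ S n <= P * Q) by (apply Rmult_le_compat; lra).
    rewrite hB in hPQ.
    assert (c01 : 0 <= (if eps n then 1 else 0) <= 1) by (destruct (eps n); lra).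
    apply Rle_trans with (Rabs (P - Q) / ((LL * LL) * (LL * LL) ^ n)).
    { unfold Rdiv. pose proof (Rabs_pos (P - Q)).
      apply Rle_trans with (Rabs (P - Q) * / (P * Q)).
      - assert (0 <= Rabs (P - Q) * / (P * Q)).
        { apply Rmult_le_pos; auto. apply Rlt_le, Rinv_0_lt_compat. nra. }
        nra.
      - apply Rmult_le_compat_l; auto. apply Rinv_le_contravar; auto.
        apply Rmult_lt_0_compat; auto. unfold LL; lra. }
    apply Rle_trans with (2 * (3/2)^n * UU ^ n * del / ((LL * LL) * (LL * LL) ^ n)).
    { unfold Rdiv. apply Rmult_le_compat_r.
      apply Rlt_le, Rinv_0_lt_compat, Rmult_lt_0_compat; auto; unfold LL; lra.
      eapply Rle_trans. apply hPD.
      apply Rmult_le_compat_r; auto. apply Rmult_le_compat_r; lra. }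
    right. field. split; [lra|unfold LL; lra]. }
  assert (Ha : ex_series a) by (apply geo; lra).
  assert (Hb : ex_series b) by (apply geo; lra).
  assert (Habs : ex_series (fun n => Rabs (a n - b n))).
  { apply (@ex_series_le R_AbsRing R_CompleteNormedModule _ d); auto. intros n. change norm with Rabs. simpl.
    rewrite Rabs_Rabsolu. auto. }
  unfold piq. fold a. fold b.
  rewrite <- Series_minus; auto.
  eapply Rle_trans. apply Series_Rabs; auto.
  rewrite <- Sd. apply Series_le; auto.
  intros n; split; [apply Rabs_pos | auto].
Qed.

Lemma sup_le (X Y : R -> Prop) (c : R) :
  (forall x, X x -> exists y, Y y /\ Rabs (x - y) <= c) ->
  Rbar_le (sup_dist X Y) (Finite c).
Proof.
  intros H. unfold sup_dist, Rbar_lub.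
  destruct (Rbar_ex_lub _) as [l [Hub Hl]]. simpl.
  apply Hl. intros r [x [Hx ->]].
  destruct (H x Hx) as [y [Hy Hxy]].
  unfold dist_set. destruct (Glb_Rbar_correct (fun r => exists y, Y y /\ r = Rabs (x - y))) as [Hlb _].
  eapply Rbar_le_trans. apply Hlb. exists y. split; eauto. simpl. auto.
Qed.

Lemma bernoulli (y : R) (n : nat) : 1 <= y -> 1 + INR n * (y - 1) <= y ^ n.
Proof.
  intros Hy. induction n as [|n IH].
  - simpl. lra.
  - rewrite S_INR. simpl pow. pose proof (pos_INR n).
    assert (0 <= INR n * (y - 1)) by (apply Rmult_le_pos; lra). nra.
Qed.

Theorem lemma4p7 (k : nat) (qk q : R) :
  (9 <= k)%nat ->
  1 < qk < 2 ->
  qk ^ k = sum_f_R0 (fun i => qk ^ i) (k - 1) ->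
  Rabs (q - qk) < / qk ^ (2 * k + 6) ->
  Rbar_lt (dH (piq_S q (k - 1)) (piq_S qk (k - 1))) (Finite (/ qk ^ (2 * k + 4))).
Proof.
  intros Hk Hqk Heq Hd.
  pose proof (GP_finite qk (k - 1)) as G.
  replace (k - 1 + 1)%nat with k in G by lia.
  rewrite <- Heq in G.
  set (P := qk ^ k) in *.
  assert (HP : P * (2 - qk) = 1) by lra.
  assert (Hb := bernoulli qk k ltac:(lra)).
  assert (H9 : 9 <= INR k) by (replace 9 with (INR 9) by (simpl; lra); apply le_INR; lia).
  assert (Hb2 : 1 + 9 * (qk - 1) <= P) by (fold P in Hb; nra).
  assert (Hy1 : 17/9 <= qk) by nra.
  assert (HP9 : (17/9)^9 <= P).
  { apply Rle_trans with (qk ^ 9). apply pow_incr; lra.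
    apply Rle_pow; [lra|lia]. }
  assert (HP300 : 300 <= P) by (simpl in HP9; lra).
  assert (Hy2 : 199/100 <= qk) by nra.
  assert (Hbig : P <= qk ^ (2 * k + 6)) by (apply Rle_pow; [lra|lia]).
  assert (Hdel : Rabs (q - qk) < 1/300).
  { eapply Rlt_le_trans. apply Hd. unfold Rdiv. rewrite Rmult_1_l.
    apply Rinv_le_contravar; lra. }
  assert (Hq : LL <= q <= UU) by (unfold LL, UU; apply Rabs_def2 in Hdel; lra).
  assert (Hp : LL <= qk <= UU) by (unfold LL, UU; lra).
  set (c := 2 * Rabs (q - qk) / (LL * LL) * / (1 - rr)).
  assert (Hc : c <= 23/10 * Rabs (q - qk)).
  { unfold c, rr, LL, UU. pose proof (Rabs_pos (q - qk)). lra. }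
  assert (H1 : Rbar_le (sup_dist (piq_S q (k - 1)) (piq_S qk (k - 1))) (Finite c)).
  { apply sup_le. intros x [eps [Hs ->]]. exists (piq qk eps). split.
    exists eps; split; auto. apply key; auto. }
  assert (H2 : Rbar_le (sup_dist (piq_S qk (k - 1)) (piq_S q (k - 1))) (Finite c)).
  { apply sup_le. intros x [eps [Hs ->]]. exists (piq q eps). split.
    exists eps; split; auto. rewrite Rabs_minus_sym. apply key; auto. }
  assert (Hlt : c < / qk ^ (2 * k + 4)).
  { set (T := qk ^ (2 * k + 4)).
    assert (HT : 0 < T) by (apply pow_lt; lra).
    assert (E : qk ^ (2 * k + 6) = T * (qk * qk)).
    { unfold T. replace (2 * k + 6)%nat with ((2 * k + 4) + 2)%nat by lia.
      rewrite pow_add. simpl. ring. }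
    rewrite E in Hd.
    assert (Hd' : Rabs (q - qk) * (T * (qk * qk)) < 1).
    { apply (Rmult_lt_compat_r (T * (qk * qk))) in Hd; [|nra].
      rewrite Rinv_l in Hd; nra. }
    apply (Rmult_lt_reg_r T); auto. rewrite Rinv_l; [|lra].
    pose proof (Rabs_pos (q - qk)). nra. }
  unfold dH, Rbar_max.
  destruct (Rbar_le_dec _ _);
  [ destruct (sup_dist (piq_S qk (k - 1)) (piq_S q (k - 1))) eqn:E |
    destruct (sup_dist (piq_S q (k - 1)) (piq_S qk (k - 1))) eqn:E ];
  simpl in *; try tauto; lra.
Qed.
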